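(* Let $0<p\le q<\infty$ and let $k,l,n$ be positive integers. Put $\bar p=\min(1,p)$. Then $$ e_{k+l-1}\bigl(id:\ell_p^n(\mathbb{R})\to\ell_q^n(\mathbb{R})\bigr)\le 2^{1/\bar p}\, e^{p/q}_k\bigl(id:\ell_p^n(\mathbb{R})\to\ell_p^n(\mathbb{R})\bigr)\cdot e_l^{1-p/q}\bigl(id:\ell_p^n(\mathbb{R})\to\ell_\infty^n(\mathbb{R})\bigr). $$
   Context: For $0<p\le\infty$, $\ell_p^n(\mathbb{R})$ denotes $\mathbb{R}^n$ with the (quasi-)norm $\|x\|_p=(\sum_{i=1}^n|x_i|^p)^{1/p}$ for $p<\infty$ and $\|x\|_\infty=\max_i|x_i|$; its unit ball is $B_p^n$. For a bounded linear operator $T:X\to Y$ between quasi-Banach spaces and $k\in\mathbb{N}$, the $k$-th (dyadic) entropy number is $e_k(T)=\inf\{r>0:\exists y_1,\dots,y_{2^{k-1}}\in Y \text{ with } T(B_X)\subset\bigcup_{j=1}^{2^{k-1}}(y_j+rB_Y)\}$, where $B_X,B_Y$ are the closed unit balls. The identity $id:\ell_p^n\to\ell_q^n$ is the identity map on $\mathbb{R}^n$ viewed between these spaces. *)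

(* Defs.v *)
From HB Require Import structures.
From mathcomp Require Import all_boot all_order all_algebra.
From mathcomp Require Import all_classical all_reals all_analysis.
Set Implicit Arguments. Unset Strict Implicit. Unset Printing Implicit Defensive.
Import Order.TTheory GRing.Theory Num.Theory.
Local Open Scope classical_set_scope.
Local Open Scope ring_scope.

Definition vec (R : realType) (n : nat) := 'I_n -> R.

Definition lpnorm (R : realType) (n : nat) (p : R) (x : vec R n) : R :=
  (\sum_(i < n) `|x i| `^ p) `^ p^-1.

Definition linfnorm (R : realType) (n : nat) (x : vec R n) : R :=
  \big[Num.max/0]_(i < n) `|x i|.

(* k-th dyadic entropy number of id : (R^n, nX) -> (R^n, nY):
   inf of r > 0 such that the unit ball of nX is covered by 2^(k-1)
   translates y_j + r B_Y of r times the closed unit ball of nY. *)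
Definition entropy_id (R : realType) (n : nat) (nX nY : vec R n -> R) (k : nat) : R :=
  inf [set r : R | 0 < r /\
        exists y : 'I_(2 ^ k.-1) -> vec R n,
          forall x : vec R n, nX x <= 1 ->
            exists (j : 'I_(2 ^ k.-1)) (z : vec R n),
              nY z <= 1 /\ x = (fun i => y j i + r * z i)].

(* Main.v *)
Require Import Defs.
From HB Require Import structures.
From mathcomp Require Import all_boot all_order all_algebra.
From mathcomp Require Import all_classical all_reals all_analysis.
From mathcomp Require Import ring lra zify.
Import Order.TTheory GRing.Theory Num.Theory.
Local Open Scope ring_scope.

Section H.
Context {R : realType}.
Local Open Scope convex_scope.

Lemma half_convex (a b p : R) : 1 <= p ->
  `| 2^-1 * a + 2^-1 * b | `^ p <=
   2^-1 * `| a | `^ p + 2^-1 * `| b | `^ p.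
Proof.
move=> p1; rewrite (@le_trans _ _ ((2^-1 * `| a | + 2^-1 * `| b |) `^ p))//.
  rewrite ge0_ler_powR ?nnegrE ?(le_trans _ p1)//.
  by rewrite (le_trans (ler_normD _ _))// 2!normrM ger0_norm.
rewrite {2 4}(_ : 2^-1 = 1 - 2^-1); last by rewrite {2}(splitr 1) div1r addrK.
by apply: (convex_powR p1 (Itv01 _ _)) => //=;
  rewrite ?inE/= ?in_itv/= ?normr_ge0// ?invr_ge0// invf_le1 ?ler1n.
Qed.

Lemma ge1_diff (a b p : R) : 1 <= p ->
  `| a - b | `^ p <= 2 `^ p * (2^-1 * `| a | `^ p + 2^-1 * `| b | `^ p).
Proof.
move=> p1.
have -> : a - b = 2 * (2^-1 * a + 2^-1 * (- b)).
  by rewrite mulrDr !mulrA divff ?pnatr_eq0 // !mul1r.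
rewrite normrM powRM // ger0_norm // ler_pM2l ?powR_gt0 //.
by rewrite (le_trans (half_convex _ _ _ p1)) // normrN.
Qed.

Lemma le1_subadd (a b p : R) : 0 < p -> p <= 1 -> 0 <= a -> 0 <= b ->
  (a + b) `^ p <= a `^ p + b `^ p.
Proof.
move=> p0 p1 a0 b0.
have key : forall x, 0 <= x <= 1 -> x <= x `^ p.
  move=> x /andP[x0 x1]; have [->|xn0] := eqVneq x 0.
    by rewrite powR0 ?gt_eqF.
  by apply: ger1_powR => //; rewrite lt_neqAle eq_sym xn0 x0.
have [s0|s0] := eqVneq (a + b) 0.
  by rewrite s0 powR0 ?gt_eqF // addr_ge0 ?powR_ge0.
have sp : 0 < a + b by rewrite lt_neqAle eq_sym s0 addr_ge0.
have ha : a = (a + b) * (a / (a + b)) by rewrite mulrC divfK.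
have hb : b = (a + b) * (b / (a + b)) by rewrite mulrC divfK.
have -> : a `^ p + b `^ p = (a + b) `^ p * ((a / (a + b)) `^ p + (b / (a + b)) `^ p).
  by rewrite mulrDr -!powRM ?divr_ge0 ?(ltW sp) // -ha -hb.
rewrite -{1}(mulr1 ((a + b) `^ p)) ler_pM2l ?powR_gt0 //.
apply: (@le_trans _ _ (a / (a + b) + b / (a + b))).
  by rewrite -mulrDl divff.
apply: lerD; apply: key; rewrite divr_ge0 ?(ltW sp) //= ler_pdivrMr // mul1r.
  by rewrite lerDl.
by rewrite lerDr.
Qed.

End H.

Section H2.
Context {R : realType} {n : nat}.
Implicit Types (x y u v d : vec R n) (p q : R).

Definition Sp p x := \sum_(i < n) `|x i| `^ p.

Lemma Sp_ge0 p x : 0 <= Sp p x.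
Proof. by apply: sumr_ge0 => i _; rewrite powR_ge0. Qed.

Lemma lpnormE p x : lpnorm p x = Sp p x `^ p^-1.
Proof. by []. Qed.

Lemma powRK p a : 0 < p -> 0 <= a -> (a `^ p^-1) `^ p = a.
Proof. by move=> p0 a0; rewrite -powRrM mulVf ?gt_eqF // powRr1. Qed.

Lemma powRK' p a : 0 < p -> 0 <= a -> (a `^ p) `^ p^-1 = a.
Proof. by move=> p0 a0; rewrite -powRrM mulfV ?gt_eqF // powRr1. Qed.

Lemma one_powR r : (1:R) `^ r = 1. Proof. by rewrite powR1. Qed.

Lemma lp_le1 p x : 0 < p -> lpnorm p x <= 1 -> Sp p x <= 1.
Proof.
move=> p0 h; rewrite -(powRK _ _ p0 (Sp_ge0 p x)) -(one_powR p).
rewrite -/(lpnorm p x) ge0_ler_powR ?(ltW p0) // nnegrE ?ler01.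
  by rewrite powR_ge0.
by [].
Qed.

Lemma le1_lp p x : 0 < p -> Sp p x <= 1 -> lpnorm p x <= 1.
Proof.
move=> p0 h; rewrite lpnormE -(one_powR p^-1).
by rewrite ge0_ler_powR ?invr_ge0 ?(ltW p0) // nnegrE ?Sp_ge0.
Qed.

Lemma coord_le1 p x i : 0 < p -> lpnorm p x <= 1 -> `|x i| <= 1.
Proof.
move=> p0 /(lp_le1 _ _ p0) h.
have hi : `|x i| `^ p <= 1.
  apply: le_trans h; rewrite /Sp (bigD1 i) //= lerDl.
  by apply: sumr_ge0 => j _; rewrite powR_ge0.
rewrite leNgt; apply/negP => hlt.
have := gt0_ltr_powR p0 _ _ hlt; rewrite one_powR nnegrE ler01 => /(_ isT).
by rewrite nnegrE normr_ge0 => /(_ isT); rewrite ltNge hi.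
Qed.

Lemma lpnormZ p c x : 0 < p -> 0 <= c ->
  lpnorm p (fun i => c * x i) = c * lpnorm p x.
Proof.
move=> p0 c0; rewrite !lpnormE /Sp.
under eq_bigr do rewrite normrM powRM // (ger0_norm c0).
rewrite -mulr_sumr powRM ?powR_ge0 ?sumr_ge0; last by move=> i _; rewrite powR_ge0.
rewrite powRK' //.
all: done.
Qed.

End H2.

Section H3.
Context {R : realType} {n : nat}.
Implicit Types (x y u v d : vec R n) (p q : R).

Lemma lp_diff p u u' : 0 < p -> lpnorm p u <= 1 -> lpnorm p u' <= 1 ->
  lpnorm p (fun i => u i - u' i) <= 2 `^ (Num.min 1 p)^-1.
Proof.
move=> p0 /(lp_le1 _ _ p0) hu /(lp_le1 _ _ p0) hu'.
rewrite lpnormE.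
have [hp1|hp1] := leP 1 p.
  rewrite invr1 powRr1 ?ler0n //.
  have hS : Sp p (fun i => u i - u' i) <= 2 `^ p.
    apply: (@le_trans _ _ (\sum_(i < n) 2 `^ p * (2^-1 * `|u i| `^ p + 2^-1 * `|u' i| `^ p))).
      by apply: ler_sum => i _; apply: ge1_diff.
    rewrite -mulr_sumr big_split /= -!mulr_sumr -/(Sp p u) -/(Sp p u').
    rewrite -{2}(mulr1 (2 `^ p)) ler_pM2l ?powR_gt0 //.
    apply: (@le_trans _ _ (2^-1 * 1 + 2^-1 * 1)).
      by apply: lerD; rewrite ler_pM2l.
    by rewrite !mulr1; lra.
  rewrite -(powRK' _ 2 p0) ?ler0n //.
  by rewrite ge0_ler_powR ?invr_ge0 ?(ltW p0) // nnegrE ?Sp_ge0 ?powR_ge0.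
have hS : Sp p (fun i => u i - u' i) <= 2.
  apply: (@le_trans _ _ (\sum_(i < n) (`|u i| `^ p + `|u' i| `^ p))).
    apply: ler_sum => i _; apply: le_trans _ (le1_subadd _ _ _ p0 (ltW hp1) (normr_ge0 _) (normr_ge0 _)).
    by rewrite ge0_ler_powR ?(ltW p0) // ?nnegrE ?addr_ge0 // ler_normB.
  rewrite big_split /= -/(Sp p u) -/(Sp p u').
  by apply: le_trans (lerD hu hu') _; lra.
by rewrite ge0_ler_powR ?invr_ge0 ?(ltW p0) // nnegrE ?Sp_ge0 ?ler0n.
Qed.

Lemma interp p q d M : 0 < p -> p <= q -> 0 <= M -> (forall i, `|d i| <= M) ->
  lpnorm q d <= (lpnorm p d) `^ (p / q) * M `^ (1 - p / q).
Proof.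
move=> p0 pq M0 hM.
have q0 : 0 < q by apply: lt_le_trans pq.
have hS : Sp q d <= M `^ (q - p) * Sp p d.
  rewrite /Sp mulr_sumr; apply: ler_sum => i _.
  have e : q = p + (q - p) by lra.
  rewrite {1}e powRD; last by rewrite -e gt_eqF.
  rewrite mulrC ler_wpM2r ?powR_ge0 // ge0_ler_powR ?subr_ge0 // nnegrE.
rewrite lpnormE.
apply: (@le_trans _ _ ((M `^ (q - p) * Sp p d) `^ q^-1)).
  by rewrite ge0_ler_powR ?invr_ge0 ?(ltW q0) // nnegrE ?Sp_ge0 ?mulr_ge0 ?powR_ge0 ?Sp_ge0.
rewrite powRM ?powR_ge0 ?Sp_ge0 // mulrC lpnormE -!powRrM.
have -> : p^-1 * (p / q) = q^-1 by field; rewrite ?gt_eqF.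
have -> : (q - p) * q^-1 = 1 - p / q by field; rewrite ?gt_eqF.
by [].
Qed.

End H3.

Section H4.
Context {R : realType}.

Lemma scalar_ineq (p q r1 r2 L : R) : 0 < p -> p <= q -> 0 <= r1 -> 0 <= r2 ->
  L <= (r1 * 2 `^ (Num.min 1 p)^-1) `^ (p / q) * (2 * r2) `^ (1 - p / q) ->
  L <= 2 `^ (Num.min 1 p)^-1 * r1 `^ (p / q) * r2 `^ (1 - p / q).
Proof.
move=> p0 pq r10 r20 /le_trans; apply.
set a := (Num.min 1 p)^-1; set th := p / q.
have q0 : 0 < q by apply: lt_le_trans pq.
have a1 : 1 <= a.
  rewrite /a; have [h|h] := leP 1 p; first by rewrite invr1.
  by rewrite invf_ge1 ?ltW.
have th0 : 0 <= th by rewrite /th divr_ge0 ?ltW.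
have th1 : th <= 1 by rewrite /th ler_pdivrMr // mul1r.
have key : (2 `^ a) `^ th * 2 `^ (1 - th) <= 2 `^ a :> R.
  rewrite -powRrM -powRD; last by apply/implyP => _; rewrite pnatr_eq0.
  apply: ler_powR; first by rewrite ler1n.
  nra.
rewrite !powRM ?powR_ge0 ?ler0n //.
have -> : r1 `^ th * (2 `^ a) `^ th * (2 `^ (1 - th) * r2 `^ (1 - th)) =
  (r1 `^ th * r2 `^ (1 - th)) * ((2 `^ a) `^ th * 2 `^ (1 - th)) by ring.
have -> : 2 `^ a * r1 `^ th * r2 `^ (1 - th) = (r1 `^ th * r2 `^ (1 - th)) * 2 `^ a by ring.
by rewrite ler_wpM2l ?mulr_ge0 ?powR_ge0.
Qed.

Lemma inf_pow (S : set R) (a b al : R) : (S !=set0)%classic -> (forall s, S s -> 0 < s) ->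
  0 < al -> 0 <= b -> (forall s, S s -> a <= b * s `^ al) -> a <= b * (inf S) `^ al.
Proof.
move=> Sne Spos al0 b0 h.
have inf0 : 0 <= inf S.
  by apply: lb_le_inf => // s Ss; apply: ltW; apply: Spos.
have [a0|a0] := leP a 0.
  by apply: le_trans a0 _; rewrite mulr_ge0 ?powR_ge0.
have [b00|bp] := eqVneq b 0.
  case: Sne => s Ss; have := h s Ss; rewrite b00 mul0r => ha.
  by move: a0; rewrite ltNge ha.
have bp' : 0 < b by rewrite lt_neqAle eq_sym bp b0.
set A := a / b.
have A0 : 0 <= A by rewrite /A divr_ge0 ?ltW.
have hA : (A `^ al^-1) <= inf S.
  apply: lb_le_inf => // s Ss.
  have sA : A <= s `^ al by rewrite /A ler_pdivrMr // mulrC h.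
  rewrite -(powRK' _ s al0) ?(ltW (Spos _ Ss)) //.
  by rewrite ge0_ler_powR ?invr_ge0 ?(ltW al0) // nnegrE ?powR_ge0.
have : A <= (inf S) `^ al.
  rewrite -(powRK _ A al0 A0).
  by rewrite ge0_ler_powR ?(ltW al0) // nnegrE ?powR_ge0.
by rewrite /A ler_pdivrMr // mulrC.
Qed.

End H4.

Section H5.
Context {R : realType} {n : nat}.

Lemma linf_coord (v : vec R n) i : linfnorm v <= 1 -> `|v i| <= 1.
Proof. by move=> h; apply: le_trans h; apply: le_bigmax. Qed.

Lemma combine (I J T : Type) (g : T -> I * J) (gs : forall ij, exists t, g t = ij)
  (p q r1 r2 : R) (y : I -> vec R n) (z : J -> vec R n) :
  0 < p -> p <= q -> 0 < r1 -> 0 < r2 ->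
  (forall x : vec R n, lpnorm p x <= 1 -> exists (j : I) (u : vec R n),
     lpnorm p u <= 1 /\ x = (fun i => y j i + r1 * u i)) ->
  (forall x : vec R n, lpnorm p x <= 1 -> exists (m : J) (v : vec R n),
     linfnorm v <= 1 /\ x = (fun i => z m i + r2 * v i)) ->
  exists w : T -> vec R n, forall x : vec R n, lpnorm p x <= 1 ->
    exists (t : T) (d : vec R n), lpnorm q d <= 1 /\
      x = (fun i => w t i + (2 `^ (Num.min 1 p)^-1 * r1 `^ (p / q) * r2 `^ (1 - p / q)) * d i).
Proof.
move=> p0 pq r10 r20 hy hz.
have q0 : 0 < q by apply: lt_le_trans pq.
pose cell t (a : vec R n) := lpnorm p a <= 1 /\
  (exists u, lpnorm p u <= 1 /\ a = (fun i => y (g t).1 i + r1 * u i)) /\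
  (exists v, linfnorm v <= 1 /\ a = (fun i => z (g t).2 i + r2 * v i)).
have : forall t, exists a, (exists x, cell t x) -> cell t a.
  move=> t; have [[x hx]|hn] := pselect (exists x, cell t x).
    by exists x.
  by exists (fun=> 0) => hx; exfalso; apply: hn.
case/boolp.choice => w hw.
exists w => x hx.
have [j [u [hu ex1]]] := hy x hx.
have [m [v [hv ex2]]] := hz x hx.
have [t gt] := gs (j, m).
have cx : cell t x by split => //; rewrite gt /=; split; [exists u | exists v].
have [ha [[u' [hu' ea1]] [v' [hv' ea2]]]] := hw t (ex_intro _ x cx).
move: ea1 ea2; rewrite gt /= => ea1 ea2.
set r := 2 `^ (Num.min 1 p)^-1 * r1 `^ (p / q) * r2 `^ (1 - p / q).
have rp : 0 < r by rewrite !mulr_gt0 ?powR_gt0.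
exists t, (fun i => r^-1 * (x i - w t i)); split; last first.
  by apply/funext => i /=; rewrite mulrA divff ?gt_eqF // mul1r addrC subrK.
rewrite lpnormZ //; last by rewrite invr_ge0 ltW.
rewrite ler_pdivrMl // mulr1.
apply: scalar_ineq (ltW r10) (ltW r20) _ => //.
have M0 : 0 <= 2 * r2 by rewrite mulr_ge0 ?ler0n ?ltW.
have hM : forall i, `|(fun i => x i - w t i) i| <= 2 * r2.
  move=> i; rewrite ex2 ea2 /= opprD addrACA subrr add0r -mulrBr normrM gtr0_norm //.
  rewrite mulrC ler_pM2r // (le_trans (ler_normB _ _)) // (_ : 2 = 1 + 1) ?lerD ?linf_coord //. 
apply: le_trans (interp _ _ _ _ p0 pq M0 hM) _.
rewrite ler_wpM2r ?powR_ge0 //.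
have pq0 : 0 <= p / q by rewrite divr_ge0 // ltW.
have n1 : r1 * 2 `^ (Num.min 1 p)^-1 \is Num.nneg by rewrite nnegrE mulr_ge0 ?powR_ge0 // ltW.
have n2 : lpnorm p (fun i => x i - w t i) \is Num.nneg by rewrite nnegrE lpnormE powR_ge0.
rewrite ge0_ler_powR //.
have -> : (fun i => x i - w t i) = (fun i => r1 * (u i - u' i)).
  by apply/funext => i; rewrite ex1 ea1 /= opprD addrACA subrr add0r -mulrBr.
rewrite lpnormZ //; last exact: ltW.
by rewrite ler_pM2l //; apply: lp_diff.
Qed.

End H5.

Lemma surj_pair (K L N : nat) : (0 < K)%N -> (0 < L)%N -> N = (K * L)%N ->
  exists g : 'I_N -> 'I_K * 'I_L, forall ij, exists t, g t = ij.
Proof.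
move=> K0 L0 hN.
have h1 : forall t : 'I_N, (t %/ L < K)%N by move=> t; rewrite ltn_divLR // -hN.
have h2 : forall t : 'I_N, (t %% L < L)%N by move=> t; rewrite ltn_pmod.
exists (fun t => (Ordinal (h1 t), Ordinal (h2 t))).
move=> [j m].
have ht : (j * L + m < N)%N.
  have := ltn_ord j; have := ltn_ord m; rewrite hN; nia.
exists (Ordinal ht); congr pair; apply: val_inj => /=.
  by rewrite divnMDl // divn_small ?addn0.
by rewrite modnMDl modn_small.
Qed.

Definition ES {R : realType} {n : nat} (nX nY : vec R n -> R) (k : nat) : set R :=
  [set r : R | 0 < r /\
        exists y : 'I_(2 ^ k.-1) -> vec R n,
          forall x : vec R n, nX x <= 1 ->
            exists (j : 'I_(2 ^ k.-1)) (z : vec R n),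
              nY z <= 1 /\ x = (fun i => y j i + r * z i)]%classic.

Lemma entE {R : realType} {n : nat} (nX nY : vec R n -> R) (k : nat) :
  entropy_id nX nY k = inf (ES nX nY k).
Proof. by []. Qed.

Lemma ES_pos {R : realType} {n : nat} (nX nY : vec R n -> R) (k : nat) s :
  ES nX nY k s -> 0 < s.
Proof. by case. Qed.

Lemma ES_ne {R : realType} {n : nat} (nX nY : vec R n -> R) (k : nat) :
  (forall x, nX x <= 1 -> nY x <= 1) -> (ES nX nY k !=set0)%classic.
Proof.
move=> h; exists 1; split => //.
exists (fun _ _ => 0) => x hx.
have K0 : (0 < 2 ^ k.-1)%N by rewrite expn_gt0.
exists (Ordinal K0), x; split; first exact: h.
by apply/funext => i; rewrite add0r mul1r.
Qed.

Theorem lemma8 (R : realType) (p q : R) (k l n : nat)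
  (hp : 0 < p) (hpq : p <= q) (hk : (0 < k)%N) (hl : (0 < l)%N) (hn : (0 < n)%N) :
  entropy_id (lpnorm (n:=n) p) (lpnorm (n:=n) q) (k + l - 1)
  <= 2 `^ ((Num.min 1 p)^-1)
     * (entropy_id (lpnorm (n:=n) p) (lpnorm (n:=n) p) k) `^ (p / q)
     * (entropy_id (lpnorm (n:=n) p) (@linfnorm R n) l) `^ (1 - p / q).
Proof.
have q0 : 0 < q by apply: lt_le_trans hpq.
have th0 : 0 < p / q by rewrite divr_gt0.
have th1 : p / q <= 1 by rewrite ler_pdivrMr // mul1r.
set C := 2 `^ (Num.min 1 p)^-1.
have C0 : 0 <= C by rewrite powR_ge0.
have [g gs] : exists g : 'I_(2 ^ (k + l - 1).-1) -> 'I_(2 ^ k.-1) * 'I_(2 ^ l.-1),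
    forall ij, exists t, g t = ij.
  apply: surj_pair; rewrite ?expn_gt0 // -expnD; congr (_ ^ _)%N; lia.
have ne1 : (ES (lpnorm (n:=n) p) (lpnorm (n:=n) p) k !=set0)%classic.
  by apply: ES_ne.
have ne2 : (ES (lpnorm (n:=n) p) (@linfnorm R n) l !=set0)%classic.
  apply: ES_ne => x hx; apply: bigmax_le => // i _.
  exact: coord_le1 hp hx.
rewrite !entE.
have key : forall s t, ES (lpnorm (n:=n) p) (lpnorm (n:=n) p) k s ->
    ES (lpnorm (n:=n) p) (@linfnorm R n) l t ->
    inf (ES (lpnorm (n:=n) p) (lpnorm (n:=n) q) (k + l - 1)) <=
    C * s `^ (p / q) * t `^ (1 - p / q).
  move=> s t [s0 [y hy]] [t0 [z hz]].
  have [w hw] := @combine R n _ _ _ g gs p q s t y z hp hpq s0 t0 hy hz.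
  apply: ge_inf.
    by exists 0 => r [r0 _]; apply: ltW.
  split; first by rewrite !mulr_gt0 ?powR_gt0.
  by exists w.
have stepA : forall t, ES (lpnorm (n:=n) p) (@linfnorm R n) l t ->
    inf (ES (lpnorm (n:=n) p) (lpnorm (n:=n) q) (k + l - 1)) <=
    (C * t `^ (1 - p / q)) * (inf (ES (lpnorm (n:=n) p) (lpnorm (n:=n) p) k)) `^ (p / q).
  move=> t ht; apply: inf_pow => //.
  - exact: ES_pos.
  - by rewrite mulr_ge0 ?powR_ge0.
  - by move=> s hs; rewrite mulrAC; apply: key.
have [e0|e0] := eqVneq (1 - p / q) 0.
  case: ne2 => t ht; have := stepA t ht.
  by rewrite e0 !powRr0 !mulr1.
have e1 : 0 < 1 - p / q by rewrite lt_neqAle eq_sym e0 subr_ge0.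
apply: inf_pow => //.
- exact: ES_pos.
- by rewrite mulr_ge0 ?powR_ge0.
- by move=> t ht; rewrite mulrAC; apply: stepA.
Qed.
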